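(* Let $(X,S)$ be an association scheme with the trivial partition $S=\{\mathbf{1},\sigma\}$, where $\mathbf{1}=\{(x,x)\mid x\in X\}$ and $\sigma=(X\times X)\setminus\mathbf{1}$, and suppose $\sharp X\geq3$. Let $F,G\colon\jmath(X,S)\to\jmath(X,S)$ be self-homotopy equivalences with $F\sim G$. Then $F=G$.
   Context: An association scheme is a pair $(X,S)$ with $X$ a finite set and $S$ a partition of $X\times X$ containing $\{(x,x)\mid x\in X\}$, closed under $g\mapsto g^*=\{(y,x)\mid(x,y)\in g\}$, such that for all $e,f,g\in S$ the number $\sharp\{y\in X\mid(x,y)\in e,(y,z)\in f\}$ is the same for all $(x,z)\in g$. The quasi-schemoid $\jmath(X,S)=(\mathcal{C},S)$ has $ob(\mathcal{C})=X$, $\mathrm{Hom}_{\mathcal{C}}(y,x)=\{(x,y)\}$, composition $(z,x)\circ(x,y)=(z,y)$, and partition $S$ of $mor(\mathcal{C})=X\times X$. A morphism of quasi-schemoids is a functor sending each block of the source partition into some block of the target partition. Product: $(\mathcal{C},S)\times(\mathcal{E},S')=(\mathcal{C}\times\mathcal{E},\{\sigma\times\tau\})$. $[1]$ has objects $0,1$ and one non-identity morphism $0\to1$; $I=([1],\{\{f\}\}_{f})$. A homotopy $H\colon F\Rightarrow G$ is a morphism $H\colon(\mathcal{C},S)\times I\to(\mathcal{D},S')$ with $H\circ\varepsilon_0=F$, $H\circ\varepsilon_1=G$ ($\varepsilon_i(a)=(a,i)$, $\varepsilon_i(f)=(f,1_i)$). $F\sim G$ means there is a homotopy $F\Rightarrow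 G$ or $G\Rightarrow F$; $F\simeq G$ means a finite chain $F=F_0\sim\cdots\sim F_n=G$. A self-homotopy equivalence of $A$ is a morphism $F\colon A\to A$ for which there is $G\colon A\to A$ with $FG\simeq1$ and $GF\simeq1$. *)

(* Defs.v *)
From mathcomp Require Import all_boot.
From Stdlib Require Import Relations.Relation_Operators.

Set Implicit Arguments.
Unset Strict Implicit.
Unset Printing Implicit Defensive.

(* Objects of [1]: bool, with false = 0 and true = 1. *)
Inductive mor1 : Type := id0 | id1 | arr01.

Definition dom1 (g : mor1) : bool :=
  match g with id0 => false | id1 => true | arr01 => false end.
Definition cod1 (g : mor1) : bool :=
  match g with id0 => false | id1 => true | arr01 => true end.
Definition idm1 (i : bool) : mor1 := if i then id1 else id0.
(* comp1 g h = g \o h ; only meaningful when dom1 g = cod1 h *)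
Definition comp1 (g h : mor1) : mor1 :=
  match g, h with
  | id0, id0 => id0
  | id1, id1 => id1
  | id1, arr01 => arr01
  | arr01, id0 => arr01
  | _, _ => g
  end.

Section JX.
Variable X : finType.

(* mor(C) = X * X ; (x,y) is the unique morphism y -> x *)
Definition jdom (m : X * X) : X := m.2.
Definition jcod (m : X * X) : X := m.1.
Definition jid (a : X) : X * X := (a, a).
Definition jcomp (m n : X * X) : X * X := (m.1, n.2).
(* the trivial partition S = {1, sigma}: true = block 1 (diagonal), false = sigma *)
Definition jblk (m : X * X) : bool := m.1 == m.2.

Definition qmor := ((X -> X) * (X * X -> X * X))%type.

Definition is_functor (F : qmor) : Prop :=
  [/\ (forall m, jdom (F.2 m) = F.1 (jdom m) /\ jcod (F.2 m) = F.1 (jcod m)),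
      (forall a, F.2 (jid a) = jid (F.1 a)) &
      (forall m n, jdom m = jcod n -> F.2 (jcomp m n) = jcomp (F.2 m) (F.2 n))].

(* morphism of quasi-schemoids: functor sending each block into some block *)
Definition is_qsmor (F : qmor) : Prop :=
  is_functor F /\ (forall m n, jblk m = jblk n -> jblk (F.2 m) = jblk (F.2 n)).

Definition qcomp (F G : qmor) : qmor := (F.1 \o G.1, F.2 \o G.2).
Definition qid : qmor := (id, id).

Definition pdom (p : (X * X) * mor1) : X * bool := (jdom p.1, dom1 p.2).
Definition pcod (p : (X * X) * mor1) : X * bool := (jcod p.1, cod1 p.2).
Definition pid (o : X * bool) : (X * X) * mor1 := (jid o.1, idm1 o.2).
Definition pcomp (p q : (X * X) * mor1) : (X * X) * mor1 :=
  (jcomp p.1 q.1, comp1 p.2 q.2).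
(* blocks sigma x {g}, sigma in S, g a morphism of [1] *)
Definition pblk (p : (X * X) * mor1) : bool * mor1 := (jblk p.1, p.2).

Definition is_homotopy (Ho : X * bool -> X) (Hm : (X * X) * mor1 -> X * X)
    (F G : qmor) : Prop :=
  [/\ (forall p, jdom (Hm p) = Ho (pdom p) /\ jcod (Hm p) = Ho (pcod p)),
      (forall o, Hm (pid o) = jid (Ho o)),
      (forall p q, pdom p = pcod q -> Hm (pcomp p q) = jcomp (Hm p) (Hm q)),
      (forall p q, pblk p = pblk q -> jblk (Hm p) = jblk (Hm q)) &
      [/\ (forall a, Ho (a, false) = F.1 a), (forall m, Hm (m, id0) = F.2 m),
          (forall a, Ho (a, true) = G.1 a) & (forall m, Hm (m, id1) = G.2 m)]].

Definition homotopic (F G : qmor) : Prop :=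
  exists Ho Hm, is_homotopy Ho Hm F G.

Definition qsim (F G : qmor) : Prop :=
  is_qsmor F /\ is_qsmor G /\ (homotopic F G \/ homotopic G F).

Definition qhequiv : qmor -> qmor -> Prop := @clos_refl_trans qmor qsim.

Definition self_heq (F : qmor) : Prop :=
  is_qsmor F /\
  exists G, is_qsmor G /\ qhequiv (qcomp F G) qid /\ qhequiv (qcomp G F) qid.

End JX.

(* Main.v *)
Require Import Defs.
From mathcomp Require Import all_boot.
From Stdlib Require Import Relations.Relation_Operators FunctionalExtensionality.

Section S.
Variable X : finType.

Lemma hom_facts {Ho : X * bool -> X} {Hm} {K L : qmor X} :
  is_homotopy Ho Hm K L ->
  (forall x y, (L.1 x == K.1 x) = (L.1 y == K.1 y)) /\
  (forall x y x' y', x != y -> x' != y' -> (L.1 x == K.1 y) = (L.1 x' == K.1 y')).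
Proof.
case=> Hd _ _ Hb [HK0 _ HL1 _].
have E : forall x y, Hm ((x, y), arr01) = (L.1 x, K.1 y).
  move=> x y; have [h1 h2] := Hd ((x, y), arr01).
  rewrite /pdom /pcod /= in h1 h2.
  rewrite -HK0 -HL1 -h1 -h2 /jdom /jcod; by case: (Hm _).
split.
  move=> x y; have := Hb ((x, x), arr01) ((y, y), arr01).
  by rewrite /pblk /jblk /= !eqxx !E /= => ->.
move=> x y x' y' nxy nxy'; have := Hb ((x, y), arr01) ((x', y'), arr01).
by rewrite /pblk /jblk /= (negbTE nxy) (negbTE nxy') !E /= => ->.
Qed.

Lemma qsim_facts {K L : qmor X} : qsim K L ->
  (forall x y, (L.1 x == K.1 x) = (L.1 y == K.1 y)) /\
  (forall x y x' y', x != y -> x' != y' -> (L.1 x == K.1 y) = (L.1 x' == K.1 y')).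
Proof.
case=> _ [_ [[Ho [Hm H]]|[Ho [Hm H]]]]; first exact: (hom_facts H).
have [D O] := hom_facts H; split.
  by move=> x y; rewrite eq_sym (D x y) eq_sym.
move=> x y x' y' n n'; rewrite eq_sym (O y x y' x') 1?eq_sym //.
Qed.

Lemma qs_eq {K : qmor X} : is_qsmor K -> forall m, K.2 m = (K.1 m.1, K.1 m.2).
Proof.
case=> [[Hd _ _] _] m; have [h1 h2] := Hd m; rewrite -h1 -h2 /jdom /jcod.
by case: (K.2 m).
Qed.

Lemma qs_blk {K : qmor X} : is_qsmor K -> forall {x y x' y'}, x != y -> x' != y' ->
  (K.1 x == K.1 y) = (K.1 x' == K.1 y').
Proof.
move=> HK x y x' y' n n'; have [_ Hb] := HK.
have := Hb (x, y) (x', y'); rewrite /jblk !qs_eq //= (negbTE n) (negbTE n').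
by move=> ->.
Qed.

Lemma other (x : X) : 1 < #|X| -> exists y, y != x.
Proof.
move=> h; have : 0 < #|predC1 x| by rewrite cardC1; case: #|X| h => [|[]].
by case/card_gt0P=> y; rewrite inE => ?; exists y.
Qed.

Lemma two_others (x : X) : 2 < #|X| -> exists y z, [/\ y != x, z != x & z != y].
Proof.
move=> h; have h1 : 1 < #|predC1 x| by rewrite cardC1; case: #|X| h => [|[|[]]].
have : 0 < #|predC1 x| by apply: leq_trans h1.
case/card_gt0P=> y Hy; have := cardD1 y (predC1 x); rewrite Hy => E.
have : 0 < #|[predD1 predC1 x & y]| by move: h1; rewrite E.
case/card_gt0P=> z; rewrite !inE => /andP [zy zx].
by exists y, z; split=> //; move: Hy; rewrite inE.
Qed.

Lemma pick1 : 1 < #|X| -> exists x : X, true.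
Proof. by move=> h; case/card_gt0P: (ltnW h) => x _; exists x. Qed.

Definition qconst (K : qmor X) := forall x y, K.1 x = K.1 y.

Lemma inj_or_const {K : qmor X} : 1 < #|X| -> is_qsmor K ->
  injective K.1 \/ qconst K.
Proof.
move=> h HK; have [x0 _] : exists x : X, true.
  exact: pick1.
have [y0 n0] := other x0 h.
case e: (K.1 y0 == K.1 x0).
  right=> x y; case: (eqVneq x y) => [->//|nxy].
  by apply/eqP; rewrite (qs_blk HK nxy n0).
left=> x y exy; apply/eqP; apply: contraT => nxy.
by rewrite -e -(qs_blk HK nxy n0) exy.
Qed.

Lemma const_step {K L : qmor X} : 1 < #|X| -> qsim K L -> qconst K -> qconst L.
Proof.
move=> h Hs Kc; have HL := Hs.2.1; have [D _] := qsim_facts Hs.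
case: (inj_or_const h HL) => // Li.
have [x0 _] : exists x : X, true.
  exact: pick1.
have /codomP [x1 e1] := injF_onto Li (K.1 x0).
have Eq : forall x, L.1 x = K.1 x.
  by move=> x; apply/eqP; rewrite (D x x1) -e1 (Kc x1 x0).
by move=> x y; rewrite !Eq.
Qed.

Lemma heq_inj {F : qmor X} : 2 < #|X| -> self_heq F -> injective F.1.
Proof.
move=> h [HF [G' [_ [E _]]]].
have h1 : 1 < #|X| by apply: ltnW.
case: (inj_or_const h1 HF) => // Fc; exfalso.
have C : qconst (qcomp F G') by move=> x y; rewrite /= (Fc (G'.1 x) (G'.1 y)).
have : qconst (qid X).
  elim: E C => [A B s|A|A B C' _ IH1 _ IH2] c //.
    exact: const_step h1 s c.
  exact: IH2 (IH1 c).
have [x0 _] : exists x : X, true.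
  by apply: pick1; apply: ltnW.
have [y0 n0] := other x0 h1.
by move/(_ y0 x0) => /= e; rewrite e eqxx in n0.
Qed.

End S.

Theorem lemma4p3 (X : finType) (F G : qmor X) :
  2 < #|X| -> self_heq F -> self_heq G -> qsim F G -> F = G.
Proof.
move=> h HF _ Hs.
have Fi := heq_inj _ h HF.
have [D O] := qsim_facts _ Hs.
have Eq : forall x, G.1 x = F.1 x.
  have [x0 _] : exists x : X, true.
    by apply: pick1; apply: ltnW.
  case e: (G.1 x0 == F.1 x0).
    by move=> x; apply/eqP; rewrite (D x x0).
  exfalso.
  have /codomP [y ey] := injF_onto Fi (G.1 x0).
  have nyx : x0 != y by apply/eqP => exy; move: e; rewrite ey exy eqxx.
  have [a [b [ax bx ba]]] := two_others _ x0 h.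
  have Ga : G.1 x0 = F.1 a.
    by apply/eqP; rewrite (O x0 a x0 y) ?ey // eq_sym.
  have Gb : G.1 x0 = F.1 b.
    by apply/eqP; rewrite (O x0 b x0 y) ?ey // eq_sym.
  by move/Fi: (etrans (esym Ga) Gb) => abe; rewrite abe eqxx in ba.
have E1 : G.1 = F.1 by apply: functional_extensionality.
have E2 : G.2 = F.2.
  apply: functional_extensionality => m.
  by rewrite (qs_eq _ Hs.2.1) (qs_eq _ Hs.1) !Eq.
by case: F G E1 E2 {HF Hs Fi D O Eq} => ? ? [? ?] /= -> ->.
Qed.
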